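(* Let $\Lambda$ be a lattice and let $\bar a=(a_1,\ldots,a_t)\in(\mathcal F^0(\Lambda,\bar K))^t$. For any two sublattices $\Lambda_1,\Lambda_2\subseteq\Lambda$ of finite index, $$\mathrm{CharPoly}_{\bar a,\Lambda_1+\Lambda_2}\ \Big|\ \gcd\big(\mathrm{CharPoly}_{\bar a,\Lambda_1},\,\mathrm{CharPoly}_{\bar a,\Lambda_2}\big)$$ and $$\mathrm{lcm}\big(\mathrm{CharPoly}_{\bar a,\Lambda_1},\,\mathrm{CharPoly}_{\bar a,\Lambda_2}\big)\ \Big|\ \mathrm{CharPoly}_{\bar a,\Lambda_1\cap\Lambda_2}.$$ Consequently, $\mathrm{CharPoly}_{\bar a,\Lambda_2}$ divides $\mathrm{CharPoly}_{\bar a,\Lambda_1}$ whenever $\Lambda_1\subseteq\Lambda_2$.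
   Context: Let $p$ be a prime, $K=\mathrm{GF}(p^r)$, and $\bar K$ an algebraic closure of $K$. A lattice is a free abelian group of finite rank. For an abelian group $G$ and a field $F$, $\mathcal F(G,F)$ denotes the space of all functions $G\to F$ and $\mathcal F^0(G,F)$ the subspace of finitely supported functions. For $f\in\mathcal F(G,F)$ and $a\in\mathcal F^0(G,F)$ the convolution is $(f*a)(g)=\sum_{h\in G}f(h)a(g-h)$, and $\Delta_a$ is the operator $f\mapsto f*a$. For a sublattice $\Lambda'\subseteq\Lambda$ of finite index, $\mathcal F_{\Lambda'}(\Lambda,\bar K)=\{f:\Lambda\to\bar K\,:\,f(v+w)=f(v)\ \forall v\in\Lambda,w\in\Lambda'\}$; it is finite dimensional and preserved by every $\Delta_a$. For $\bar a=(a_1,\ldots,a_t)$, $\mathrm{CharPoly}_{\bar a,\Lambda'}\in\bar K[x]$ is the monic greatest common divisor of the (monic) characteristic polynomials of the restrictions $\Delta_{a_j}|_{\mathcal F_{\Lambda'}(\Lambda,\bar K)}$, $j=1,\ldots,t$. *)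

(* Defs.v *)
From HB Require Import structures.
From mathcomp Require Import all_boot all_order all_algebra all_field.
From mathcomp Require Import finmap.
From Stdlib Require Import ClassicalEpsilon.

Set Implicit Arguments.
Unset Strict Implicit.
Unset Printing Implicit Defensive.
Import GRing.Theory.
Local Open Scope ring_scope.

(* The lattice Lambda of rank n, realised as Z^n (row vectors of integers). *)
Definition lat (n : nat) := 'rV[int]_n.

Definition sublattice n (S : lat n -> Prop) : Prop :=
  S 0 /\ (forall x y, S x -> S y -> S (x - y)).

Definition finite_index n (S : lat n -> Prop) : Prop :=
  exists s : seq (lat n), forall v, exists2 w, w \in s & S (v - w).

Definition lat_add n (S1 S2 : lat n -> Prop) : lat n -> Prop :=
  fun v => exists x y, [/\ S1 x, S2 y & v = x + y].

Definition lat_cap n (S1 S2 : lat n -> Prop) : lat n -> Prop :=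
  fun v => S1 v /\ S2 v.

Section CharPoly.
Variables (F : fieldType) (n : nat).

(* f * a, for a finitely supported: (f*a)(g) = sum_h f(h) a(g-h)
   = sum_{k in supp a} f(g-k) a(k). *)
Definition conv (f : lat n -> F) (a : {fsfun lat n -> F with 0}) : lat n -> F :=
  fun g => \sum_(k <- finsupp a) f (g - k) * a k.

Definition periodic (S : lat n -> Prop) (f : lat n -> F) : Prop :=
  forall v w, S w -> f (v + w) = f v.

Definition is_charpoly_on (V : (lat n -> F) -> Prop)
    (T : (lat n -> F) -> (lat n -> F)) (q : {poly F}) : Prop :=
  exists m (b : 'I_m -> lat n -> F) (M : 'M[F]_m),
    [/\ forall i, V (b i),
        forall f, V f -> exists c : 'I_m -> F, f = (fun x => \sum_i c i * b i x),
        forall c : 'I_m -> F, (fun x => \sum_i c i * b i x) = (fun _ => 0) ->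
                                forall i, c i = 0,
        forall i, T (b i) = (fun x => \sum_j M i j * b j x)
      & q = char_poly M].

Definition charpoly_on (V : (lat n -> F) -> Prop)
    (T : (lat n -> F) -> (lat n -> F)) : {poly F} :=
  epsilon (inhabits 0) (is_charpoly_on V T).

Definition monicize (p : {poly F}) : {poly F} := (lead_coef p)^-1 *: p.

(* CharPoly_{a,S}: monic gcd of the char. polys of Delta_{a_j} restricted
   to F_S(Lambda, F). *)
Definition CharPoly (t : nat) (a : 'I_t -> {fsfun lat n -> F with 0})
    (S : lat n -> Prop) : {poly F} :=
  monicize (\big[@gcdp F/0]_(j < t) charpoly_on (periodic S) (conv^~ (a j))).

End CharPoly.

Definition lcmp (F : fieldType) (p q : {poly F}) : {poly F} :=
  monicize ((p * q) %/ gcdp p q).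

(* Main.v *)
Require Import Defs.
From HB Require Import structures.
From mathcomp Require Import all_boot all_order all_algebra all_field.
From mathcomp Require Import finmap.
From Stdlib Require Import ClassicalEpsilon FunctionalExtensionality.
Set Implicit Arguments. Unset Strict Implicit. Unset Printing Implicit Defensive.
Import GRing.Theory.
Local Open Scope ring_scope.

Lemma char_poly_sim (F : fieldType) n (P M B : 'M[F]_n) :
  P \in unitmx -> P *m M = B *m P -> char_poly M = char_poly B.
Proof.
move=> uP e.
have eM : M = invmx P *m B *m P by rewrite -mulmxA -e mulmxA mulVmx // mul1mx.
rewrite /char_poly eM /char_poly_mx !map_mxM.
set f := map_mx polyC.
have eX : ('X%:M : 'M[{poly F}]_n) = f (invmx P) *m 'X%:M *m f P.
  by rewrite scalar_mxC -mulmxA -map_mxM mulVmx // map_mx1 mulmx1.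
have -> : ('X%:M - f (invmx P) *m f B *m f P : 'M[{poly F}]_n)
    = f (invmx P) *m ('X%:M - f B) *m f P by rewrite {1}eX mulmxBr mulmxBl.
rewrite !det_mulmx mulrC mulrA -det_mulmx -map_mxM mulmxV //.
by rewrite map_mx1 det1 mul1r.
Qed.

Lemma char_poly_lblock (F : fieldType) m k (A : 'M[F]_m) (X1 : 'M_(k, m)) (X2 : 'M_k) :
  char_poly (block_mx A 0 X1 X2) = char_poly A * char_poly X2.
Proof.
rewrite /char_poly /char_poly_mx map_block_mx /= map_mx0.
rewrite scalar_mx_block opp_block_mx add_block_mx oppr0 !addr0 add0r.
by rewrite det_lblock.
Qed.

Lemma row_free_ext (F : fieldType) m k (C : 'M[F]_(m, m + k)) :
  row_free C -> exists D : 'M_(k, m + k), col_mx C D \in unitmx.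
Proof.
move=> fC.
have eC := mulmx_ebase C.
move: fC; rewrite /row_free => /eqP rC.
rewrite rC pid_mx_row in eC.
set L := col_ebase C in eC; set U := row_ebase C in eC.
exists (dsubmx U).
have -> : col_mx C (dsubmx U) = block_mx L 0 0 1%:M *m U.
  rewrite -{2}(vsubmxK U) mul_block_col !mul0mx mul1mx addr0 add0r -eC.
  by rewrite -mulmxA -{1}(vsubmxK U) mul_row_col mul1mx mul0mx addr0.
have uU : U \in unitmx by exact: row_ebase_unit.
have uL : L \in unitmx by exact: col_ebase_unit.
rewrite unitmxE det_mulmx unitrM; apply/andP; split; last by rewrite -unitmxE.
by rewrite det_ublock det1 mulr1 -unitmxE.
Qed.

Lemma charpoly_dvd_stable (F : fieldType) m k (C : 'M[F]_(m, m + k)) (M' : 'M_m) (M : 'M_(m+k)) :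
  row_free C -> C *m M = M' *m C -> char_poly M' %| char_poly M.
Proof.
move=> fC eCM.
have [D uP] := row_free_ext fC.
set P := col_mx C D in uP.
set X := D *m M *m invmx P.
have e : P *m M = block_mx M' 0 (lsubmx X) (rsubmx X) *m P.
  rewrite /P mul_block_col mul0mx addr0 mul_col_mx eCM.
  by rewrite -mul_row_col hsubmxK /X -mulmxA mulVmx // mulmx1.
rewrite (char_poly_sim uP e) char_poly_lblock.
exact: dvdp_mulIl.
Qed.

Section Key.
Variables (F : fieldType) (n : nat).
Local Notation fn := (lat n -> F).

Definition linop (T : fn -> fn) := forall m (c : 'I_m -> F) (b : 'I_m -> fn),
  T (fun x => \sum_i c i * b i x) = (fun x => \sum_i c i * T (b i) x).

Lemma key_dvd (V V' : fn -> Prop) (T : fn -> fn) q q' :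
  (forall f, V' f -> V f) -> linop T ->
  is_charpoly_on V' T q' -> is_charpoly_on V T q -> q' %| q.
Proof.
move=> sub lin [m' [b' [M' [b'V span' ind' Tb' ->]]]] [m [b [M [bV span ind Tb ->]]]].
have: forall i, exists c, b' i = (fun x => \sum_j c j * b j x).
  by move=> i; apply: span; apply: sub.
case/fin_all_exists => c hc.
pose C : 'M[F]_(m', m) := \matrix_(i, j) c i j.
have comb : forall (v : 'I_m' -> F) x,
    \sum_i v i * b' i x = \sum_l (\sum_i v i * C i l) * b l x.
  move=> v x; rewrite (eq_bigr (fun i => \sum_l v i * C i l * b l x)); last first.
    move=> i _; rewrite hc mulr_sumr; apply: eq_bigr => l _.
    by rewrite mxE mulrA.
  rewrite exchange_big /=; apply: eq_bigr => l _; by rewrite mulr_suml.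
have fC : row_free C.
  rewrite -kermx_eq0; apply/eqP/row_matrixP => i; rewrite row0.
  set v := row i (kermx C).
  have vC : v *m C = 0 by apply/sub_kermxP; exact: row_sub.
  apply/rowP => j; transitivity (0:F); last by rewrite mxE.
  apply: (ind' (fun j => v 0 j)).
  apply: functional_extensionality => x; rewrite comb.
  apply: big1 => l _.
  have := congr1 (fun A : 'rV[F]_m => A 0 l) vC; rewrite !mxE => ->.
  by rewrite mul0r.
have eCM : C *m M = M' *m C.
  apply/matrixP => i l; apply/eqP; rewrite -subr_eq0; apply/eqP.
  apply: (ind (fun l => (C *m M) i l - (M' *m C) i l)).
  apply: functional_extensionality => x.
  under eq_bigr do rewrite mulrBl.
  rewrite sumrB; apply/eqP; rewrite subr_eq0; apply/eqP.
  transitivity (T (b' i) x).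
    rewrite hc lin.
    under [RHS]eq_bigr do rewrite Tb mulr_sumr.
    rewrite exchange_big /=; apply: eq_bigr => l' _.
    by rewrite mxE mulr_suml; apply: eq_bigr => j _; rewrite !mulrA mxE.
  rewrite Tb' comb; apply: eq_bigr => l' _.
  by rewrite mxE.
have le : (m' <= m)%N by rewrite -(eqP fC) rank_leq_col.
have [k ek] : exists k, m = (m' + k)%N by exists (m - m')%N; rewrite subnKC.
subst m.
exact: charpoly_dvd_stable fC eCM.
Qed.

End Key.

Definition pdec (P : Prop) : bool :=
  if excluded_middle_informative P then true else false.

Lemma pdecP (P : Prop) : pdec P <-> P.
Proof. by rewrite /pdec; case: excluded_middle_informative. Qed.

Section Poly.
Variable F : fieldType.

Lemma monicize_eqp (p : {poly F}) : monicize p %= p.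
Proof.
rewrite /monicize; have [->|pn0] := eqVneq p 0; first by rewrite scaler0 eqpxx.
by apply: eqp_scale; rewrite invr_eq0 lead_coef_eq0.
Qed.

Lemma lcm_dvd (p q r : {poly F}) : p %| r -> q %| r -> lcmp p q %| r.
Proof.
move=> hp hq; rewrite /lcmp (eqp_dvdl _ (monicize_eqp _)).
have [g0 | gn0] := eqVneq (gcdp p q) 0.
  move/eqP: (g0); rewrite gcdp_eq0 => /andP[/eqP p0 _].
  by rewrite g0 p0 mul0r div0p dvd0p -dvd0p -p0.
set g := gcdp p q in gn0 *.
have ep : p = p %/ g * g by rewrite divpK // dvdp_gcdl.
have eq : q = q %/ g * g by rewrite divpK // dvdp_gcdr.
have er : r = r %/ q * q by rewrite divpK.
have -> : p * q %/ g = p %/ g * q by rewrite {1}ep mulrAC mulpK.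
have cop : coprimep (p %/ g) (q %/ g).
  apply: coprimep_div_gcd; apply: contraR gn0; rewrite negb_or !negbK.
  by rewrite /g gcdp_eq0.
rewrite er; apply: dvdp_mul => //.
rewrite -(Gauss_dvdpl _ cop) -(dvdp_mul2r _ _ gn0) -mulrA -eq -ep -er //.
Qed.

Lemma gcd_big_dvd t (P Q : 'I_t -> {poly F}) : (forall j, P j %| Q j) ->
  \big[@gcdp F/0]_(j < t) P j %| \big[@gcdp F/0]_(j < t) Q j.
Proof.
move=> h; apply: (big_ind2 (fun x y => x %| y)) => //.
  move=> x1 x2 y1 y2 h1 h2; rewrite dvdp_gcd.
  by rewrite (dvdp_trans (dvdp_gcdl _ _) h1) (dvdp_trans (dvdp_gcdr _ _) h2).
Qed.
End Poly.

Section Lat.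
Variable n : nat.
Implicit Types S : lat n -> Prop.

Lemma subl_opp S x : sublattice S -> S x -> S (- x).
Proof. by case=> S0 SB Sx; rewrite -sub0r; apply: SB. Qed.

Lemma subl_add S x y : sublattice S -> S x -> S y -> S (x + y).
Proof.
move=> hS Sx Sy; rewrite -(opprK y); have [_ SB] := hS; apply: SB => //.
exact: subl_opp.
Qed.

Lemma add_sub S1 S2 : sublattice S1 -> sublattice S2 -> sublattice (lat_add S1 S2).
Proof.
move=> h1 h2; split; first by exists 0, 0; case: h1; case: h2; split => //; rewrite addr0.
move=> _ _ [x1 [y1 [X1 Y1 ->]]] [x2 [y2 [X2 Y2 ->]]].
exists (x1 - x2), (y1 - y2); split; first by case: h1 => _; apply.
  by case: h2 => _; apply.
by rewrite opprD addrACA.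
Qed.

Lemma add_fi S1 S2 : sublattice S2 -> finite_index S1 -> finite_index (lat_add S1 S2).
Proof.
move=> h2 [s hs]; exists s => v; have [w ws h] := hs v; exists w => //.
by exists (v - w), 0; split => //; [case: h2 | rewrite addr0].
Qed.

Lemma cap_sub S1 S2 : sublattice S1 -> sublattice S2 -> sublattice (lat_cap S1 S2).
Proof.
move=> [a1 b1] [a2 b2]; split; first by split.
by move=> x y [] ? ? [] ? ?; split; [apply: b1 | apply: b2].
Qed.

Lemma cap_fi S1 S2 : sublattice S1 -> sublattice S2 ->
  finite_index S1 -> finite_index S2 -> finite_index (lat_cap S1 S2).
Proof.
move=> h1 h2 [s1 hs1] [s2 hs2].
pose pk (w1 w2 : lat n) := epsilon (inhabits 0) (fun v => S1 (v - w1) /\ S2 (v - w2)).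
exists [seq pk w1 w2 | w1 <- s1, w2 <- s2] => v.
have [w1 i1 e1] := hs1 v; have [w2 i2 e2] := hs2 v.
exists (pk w1 w2); first exact: allpairs_f.
have [u1 u2] : S1 (pk w1 w2 - w1) /\ S2 (pk w1 w2 - w2).
  by apply: (epsilon_spec (inhabits 0) (fun v => S1 (v - w1) /\ S2 (v - w2))); exists v.
split.
  have -> : v - pk w1 w2 = (v - w1) - (pk w1 w2 - w1) by rewrite opprB addrA subrK.
  by case: h1 => _; apply.
have -> : v - pk w1 w2 = (v - w2) - (pk w1 w2 - w2) by rewrite opprB addrA subrK.
by case: h2 => _; apply.
Qed.
End Lat.

Section Basis.
Variables (F : fieldType) (n : nat) (S : lat n -> Prop) (hS : sublattice S)
  (s : seq (lat n)) (hs : forall v, exists2 w, w \in s & S (v - w)).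

Definition eqS (v u : lat n) := pdec (S (v - u)).
Definition rep v := nth 0 s (find (eqS v) s).

Lemma rep_spec v : rep v \in s /\ S (v - rep v).
Proof.
have [w ws Sw] := hs v.
have hh : has (eqS v) s by apply/hasP; exists w => //; apply/pdecP.
split; first by rewrite mem_nth // -has_find.
by have := nth_find 0 hh; move/pdecP.
Qed.

Lemma rep_eq v v' : S (v - v') -> rep v = rep v'.
Proof.
move=> h; rewrite /rep (@eq_find _ (eqS v) (eqS v')) // => u.
rewrite /eqS; apply/idP/idP => /pdecP H; apply/pdecP.
  have -> : v' - u = (v - u) - (v - v') by rewrite opprB [RHS]addrC addrA subrK.
  by case: hS => _; apply.
have -> : v - u = (v - v') + (v' - u) by rewrite addrA subrK.
exact: subl_add.
Qed.

Lemma rep_rep v : rep (rep v) = rep v.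
Proof. by apply: rep_eq; rewrite -opprB; apply: subl_opp => //; case: (rep_spec v). Qed.

Definition s' := undup (map rep s).
Local Notation N := (size s').

Lemma rep_in' v : rep v \in s'.
Proof. by rewrite mem_undup -rep_rep; apply: map_f; case: (rep_spec v). Qed.

Lemma s'_fix u : u \in s' -> rep u = u.
Proof. by rewrite mem_undup => /mapP [w _ ->]; exact: rep_rep. Qed.

Lemma eq_nth (i j : 'I_N) : (nth 0 s' i == nth 0 s' j) = (i == j).
Proof. by rewrite nth_uniq // undup_uniq. Qed.

Definition bas (i : 'I_N) (x : lat n) : F := (nth 0 s' i == rep x)%:R.

Lemma idx_lt x : (index (rep x) s' < N)%N.
Proof. by rewrite index_mem rep_in'. Qed.

Definition idx x : 'I_N := Ordinal (idx_lt x).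

Lemma bas_idx i x : bas i x = (i == idx x)%:R.
Proof.
by rewrite /bas -{1}(nth_index 0 (rep_in' x)) eq_sym -[index _ _]/(nat_of_ord (idx x)) eq_nth eq_sym.
Qed.

Lemma sum_delta m (j : 'I_m) (g : 'I_m -> F) : \sum_i g i * (i == j)%:R = g j.
Proof.
rewrite (bigD1 j) //= eqxx mulr1 big1 ?addr0 // => i /negPf ->.
by rewrite mulr0.
Qed.

Lemma bas_exists (T : (lat n -> F) -> (lat n -> F)) :
  (forall f, periodic S f -> periodic S (T f)) ->
  exists q, is_charpoly_on (periodic S) T q.
Proof.
move=> TV.
have per : forall i, periodic S (bas i).
  move=> i v w Sw; rewrite /bas (@rep_eq (v + w) v) //.
  by rewrite addrAC subrr add0r.
have span : forall f, periodic S f ->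
    exists c : 'I_N -> F, f = (fun x => \sum_i c i * bas i x).
  move=> f pf; exists (fun i => f (nth 0 s' i)).
  apply: functional_extensionality => x.
  under eq_bigr do rewrite bas_idx.
  rewrite sum_delta /= nth_index ?rep_in' //.
  have := pf (rep x) (x - rep x) (rep_spec x).2.
  by rewrite addrC subrK.
have: forall i, exists c : 'I_N -> F, T (bas i) = (fun x => \sum_j c j * bas j x).
  by move=> i; apply: span; apply: TV.
case/fin_all_exists => c hc.
exists (char_poly (\matrix_(i, j) c i j)); exists N, bas, (\matrix_(i, j) c i j).
split => //.
- move=> c0 H j; have := congr1 (fun g => g (nth 0 s' j)) H => /=.
  rewrite (eq_bigr (fun i => c0 i * (i == j)%:R)) ?sum_delta // => i _.
  by rewrite /bas s'_fix ?mem_nth // eq_nth.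
- move=> i; rewrite hc; apply: functional_extensionality => x.
  by apply: eq_bigr => j _; rewrite mxE.
Qed.
End Basis.

Section Final.
Variables (F : fieldType) (n : nat).

Lemma conv_lin (a : {fsfun lat n -> F with 0}) : linop (fun f : lat n -> F => conv f a).
Proof.
move=> m c b; apply: functional_extensionality => g; rewrite /conv.
under eq_bigr do rewrite mulr_suml.
rewrite exchange_big /=; apply: eq_bigr => i _.
by rewrite mulr_sumr; apply: eq_bigr => k _; rewrite mulrA.
Qed.

Lemma conv_per S (a : {fsfun lat n -> F with 0}) f :
  periodic S f -> periodic S (conv f a).
Proof.
move=> pf v w Sw; rewrite /conv; apply: eq_bigr => k _; move: (pf (v - k) w Sw).
by rewrite addrAC => ->.
Qed.

Lemma cp_spec S (a : {fsfun lat n -> F with 0}) : sublattice S -> finite_index S ->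
  is_charpoly_on (periodic S) (fun f : lat n -> F => conv f a) (charpoly_on (periodic S) (fun f : lat n -> F => conv f a)).
Proof.
move=> hS [s hs].
have [q hq] := bas_exists hS hs (@conv_per S a).
exact: (epsilon_spec (inhabits 0) _ (ex_intro _ q hq)).
Qed.

Lemma CP_mono t (a : 'I_t -> {fsfun lat n -> F with 0}) S S' :
  sublattice S -> finite_index S -> sublattice S' -> finite_index S' ->
  (forall v, S v -> S' v) -> CharPoly a S' %| CharPoly a S.
Proof.
move=> h1 f1 h2 f2 sub.
rewrite /CharPoly (eqp_dvdl _ (monicize_eqp _)) (eqp_dvdr _ (monicize_eqp _)).
apply: gcd_big_dvd => j.
apply: (key_dvd _ (conv_lin (a j)) (cp_spec (a j) h2 f2) (cp_spec (a j) h1 f1)).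
by move=> f pf v w Sw; apply: pf; apply: sub.
Qed.
End Final.

Unset Implicit Arguments.

Theorem theorem2p4 (p r : nat) (K : finFieldType) (Kbar : closedFieldType)
    (iota : {rmorphism K -> Kbar})
    (hp : prime p) (hr : (0 < r)%N) (hK : #|K| = (p ^ r)%N)
    (halg : forall x : Kbar,
        exists2 q : {poly K}, q != 0 & root (map_poly iota q) x)
    (n t : nat) (a : 'I_t -> {fsfun lat n -> Kbar with 0})
    (L1 L2 : lat n -> Prop) :
  sublattice L1 -> finite_index L1 -> sublattice L2 -> finite_index L2 ->
  [/\ CharPoly a (lat_add L1 L2) %| gcdp (CharPoly a L1) (CharPoly a L2),
      lcmp (CharPoly a L1) (CharPoly a L2) %| CharPoly a (lat_cap L1 L2)
    & (forall v, L1 v -> L2 v) -> CharPoly a L2 %| CharPoly a L1].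
Proof.
move=> h1 f1 h2 f2.
have hA := add_sub h1 h2; have fA := add_fi h2 f1.
have hC := cap_sub h1 h2; have fC := cap_fi h1 h2 f1 f2.
split.
- rewrite dvdp_gcd; apply/andP; split; apply: CP_mono => // v Lv.
    by exists v, 0; split => //; [case: h2 | rewrite addr0].
  by exists 0, v; split => //; [case: h1 | rewrite add0r].
- by apply: lcm_dvd; apply: CP_mono => // v [].
- exact: CP_mono.
Qed.
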